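(* Let $(A,v)$, $(B,w)$ be valued abelian groups, $f:A\to B$ a group homomorphism, and $S\subseteq A$ a subset satisfying conditions (a), (b), (c) below, with $\varphi:v(S)\to w(B)$ the map from (a). Assume $(A,v)$ is spherically complete. Then for every $a\in A$ and every $\alpha\in v(S)$, $$f(B_\alpha(a))=B_{\varphi(\alpha)}(f(a)),$$ where the right-hand side is the ball in $(B,w)$. Conditions: (a) the assignment $vs\mapsto wf(s)$ ($s\in S$) defines a map $\varphi:v(S)\to w(B)$ (i.e. $vs=vs'\Rightarrow wf(s)=wf(s')$) which is order preserving ($vs<vs'\Rightarrow wf(s)<wf(s')$); (b) for all $a\in A$, $s\in S$: $va\ge vs\Rightarrow wf(a)\ge wf(s)$; (c) for every $b\in B\setminus\{0\}$ there is $s\in S$ with $w(b-f(s))>wb$.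
   Context: A valued abelian group $(A,v)$ is an abelian group $A$ with a map $v:A\to \Gamma\cup\{\infty\}$, $a\mapsto va$, onto a totally ordered set with largest element $\infty$, such that $va=\infty\iff a=0$ and $v(a-a')\ge\min\{va,va'\}$ for all $a,a'\in A$. For $X\subseteq A$ write $v(X)=\{vx\mid x\in X\}$. For $a\in A$ and $\alpha\in v(A)$ the ball is $B_\alpha(a)=\{a'\in A\mid v(a-a')\ge\alpha\}$. A nest of balls is a set of balls totally ordered by inclusion; $(A,v)$ is spherically complete if every nest of balls has nonempty intersection. *)

(* Defs.v *)
From HB Require Import structures.
From mathcomp Require Import all_boot all_order all_algebra.
Set Implicit Arguments. Unset Strict Implicit. Unset Printing Implicit Defensive.
Import Order.TTheory GRing.Theory.
Local Open Scope order_scope.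

(* A valued abelian group (A, v): v : A -> G onto a totally ordered set G
   (playing the role of Gamma \cup {oo}) with largest element inf (= oo),
   such that v a = oo <-> a = 0 and v (a - a') >= min (v a) (v a'). *)
Definition valued (A : zmodType) (d : Order.disp_t) (G : orderType d)
    (inf : G) (v : A -> G) : Prop :=
  [/\ (forall g : G, g <= inf),
      (forall a : A, v a = inf <-> a = 0%R),
      (forall a a' : A, Order.min (v a) (v a') <= v (a - a')%R)
    & (forall g : G, exists a : A, v a = g)].

Definition ball (A : zmodType) (d : Order.disp_t) (G : orderType d)
    (v : A -> G) (alpha : G) (a : A) : A -> Prop :=
  fun a' => alpha <= v (a - a')%R.

Definition is_ball (A : zmodType) (d : Order.disp_t) (G : orderType d)
    (v : A -> G) (X : A -> Prop) : Prop :=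
  exists (a : A) (alpha : G), (exists x : A, v x = alpha) /\
    (forall y : A, X y <-> ball v alpha a y).

Definition spherically_complete (A : zmodType) (d : Order.disp_t)
    (G : orderType d) (v : A -> G) : Prop :=
  forall N : (A -> Prop) -> Prop,
    (forall X, N X -> is_ball v X) ->
    (forall X Y, N X -> N Y ->
       (forall y, X y -> Y y) \/ (forall y, Y y -> X y)) ->
    exists a : A, forall X, N X -> X a.

(* Main.v *)
Require Import Defs.
From HB Require Import structures.
From mathcomp Require Import all_boot all_order all_algebra.
From mathcomp Require Import classical_sets.
Import Order.TTheory GRing.Theory.
Local Open Scope order_scope.

Lemma val_opp {A : zmodType} {d : Order.disp_t} {G : orderType d} {inf : G} {v : A -> G} :
  valued inf v -> forall a, v (- a)%R = v a.
Proof.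
case=> top z0 ult _ a.
have h0 : v 0%R = inf by apply/z0.
have H x : v x <= v (- x)%R.
  have := ult 0%R x; rewrite sub0r h0.
  by have -> : Order.min inf (v x) = v x by apply/min_idPr; exact: top.
apply/le_anti; apply/andP; split; last exact: H.
by have := H (- a)%R; rewrite opprK.
Qed.

Lemma val_add {A : zmodType} {d : Order.disp_t} {G : orderType d} {inf : G} {v : A -> G} :
  valued inf v -> forall a a', Order.min (v a) (v a') <= v (a + a')%R.
Proof.
move=> hv a a'; case: (hv) => _ _ ult _; have := ult a (- a')%R.
by rewrite opprK (val_opp hv).
Qed.

Lemma val_min {A : zmodType} {d : Order.disp_t} {G : orderType d} {inf : G} {v : A -> G} :
  valued inf v -> forall a a' g, g <= v a -> g <= v a' -> g <= v (a + a')%R.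
Proof.
move=> hv a a' g h1 h2; apply: le_trans (val_add hv a a').
by rewrite le_min h1 h2.
Qed.

Lemma val_minB {A : zmodType} {d : Order.disp_t} {G : orderType d} {inf : G} {v : A -> G} :
  valued inf v -> forall a a' g, g <= v a -> g <= v a' -> g <= v (a - a')%R.
Proof.
move=> hv a a' g h1 h2; apply: (val_min hv) => //; by rewrite (val_opp hv).
Qed.

Lemma val_eq {A : zmodType} {d : Order.disp_t} {G : orderType d} {inf : G} {v : A -> G} :
  valued inf v -> forall c t, v c < v (c - t)%R -> v t = v c.
Proof.
move=> hv c t h.
have h1 : v c <= v t.
  have : v c <= v (c - (c - t))%R by apply: (val_minB hv) => //; exact: (ltW h).
  by rewrite opprB addrC subrK.
apply/le_anti; rewrite h1 andbT leNgt; apply/negP => ht.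
have : Order.min (v (c - t)%R) (v t) <= v c.
  by have := val_add hv (c - t)%R t; rewrite subrK.
by rewrite ge_min !leNgt h ht.
Qed.

From Stdlib Require Import Classical.

Lemma core {A B : zmodType} {d1 d2 : Order.disp_t} {G1 : orderType d1} {G2 : orderType d2}
  {inf1 : G1} {inf2 : G2} {v : A -> G1} {w : B -> G2}
  {f : {additive A -> B}} {S : A -> Prop} :
  valued inf1 v -> valued inf2 w ->
  (forall s s', S s -> S s' -> v s = v s' -> w (f s) = w (f s')) ->
  (forall s s', S s -> S s' -> v s < v s' -> w (f s) < w (f s')) ->
  (forall a s, S s -> v s <= v a -> w (f s) <= w (f a)) ->
  (forall b : B, b != 0%R -> exists s, S s /\ w b < w (b - f s)%R) ->
  spherically_complete v ->
  forall s0 b, S s0 -> w (f s0) <= w b -> exists x, v s0 <= v x /\ f x = b.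
Proof.
move=> hv hw a1 a2 hb hc hsc s0 b Ss0 hwb.
have L1 t u : S t -> S u -> w (f t) <= w (f u) -> v t <= v u.
  move=> St Su h; rewrite leNgt; apply/negP => hlt.
  by have := a2 _ _ Su St hlt; rewrite ltNge h.
have L2 t u : S t -> S u -> w (f t) < w (f u) -> v t < v u.
  move=> St Su h; rewrite ltNge; apply/negP; rewrite le_eqVlt => /orP[/eqP e|l].
    by move: h; rewrite (a1 _ _ Su St e) ltxx.
  by have := a2 _ _ Su St l; rewrite ltNge (ltW h).
apply: NNPP => Hno.
pose good (X : A -> Prop) := exists x t, [/\ S t, v s0 <= v t, v s0 <= v x,
   w (f t) <= w (b - f x)%R & forall y, X y <-> v t <= v (x - y)%R].
pose P (N : set (set A)) := (forall X, N X -> good X) /\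
  (forall X Y, N X -> N Y -> (forall y, X y -> Y y) \/ (forall y, Y y -> X y)).
have [N [[PN1 PN2] Nmax]] : exists N, P N /\ forall M, (N `<` M)%classic -> ~ P M.
  apply: Zorn_bigcup => F FP Ftot; split.
    move=> X [Y FY YX]; exact: (FP Y FY).1 X YX.
  move=> X Y [X' FX' XX'] [Y' FY' YY']; case: (Ftot _ _ FX' FY') => sub.
    exact: (FP Y' FY').2 X Y (sub _ XX') YY'.
  exact: (FP X' FX').2 X Y XX' (sub _ YY').
have [z [hz zin]] : exists z, v s0 <= v z /\ forall X, N X -> X z.
  case: (classic (exists X, N X)) => [[X0 NX0]|none].
    have [|z hz] := hsc N _ PN2.
      move=> X NX; have [x [t [St _ _ _ e]]] := PN1 X NX.
      by exists x, (v t); split; [exists t|exact: e].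
    exists z; split => //.
    have [x [t [St h1 h2 _ e]]] := PN1 X0 NX0.
    have hvz := (e z).1 (hz _ NX0).
    have : v s0 <= v (x - (x - z))%R by apply: (val_minB hv) => //; exact: le_trans hvz.
    by rewrite opprB addrC subrK.
  exists 0%R; split; last by move=> X NX; exfalso; apply: none; exists X.
  by case: (hv) => top z0 _ _; rewrite (z0 0%R).2.
have fz : (b - f z)%R != 0%R.
  apply/eqP => e; apply: Hno; exists z; split => //.
  by apply/eqP; rewrite eq_sym -subr_eq0 e.
have [t [St ht]] := hc _ fz.
have wt : w (f t) = w (b - f z)%R := val_eq hw _ _ ht.
have hfz : w (f s0) <= w (f z) := hb _ _ Ss0 hz.
have hvt : v s0 <= v t by apply: L1 => //; rewrite wt; apply: (val_minB hw).
pose z' := (z + t)%R.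
have hz' : v s0 <= v z' by apply: (val_min hv).
have e' : (b - f z')%R = (b - f z - f t)%R by rewrite /z' raddfD opprD addrA.
have fz' : (b - f z')%R != 0%R.
  apply/eqP => e; apply: Hno; exists z'; split => //.
  by apply/eqP; rewrite eq_sym -subr_eq0 e.
have [u [Su hu]] := hc _ fz'.
have wu : w (f u) = w (b - f z')%R := val_eq hw _ _ hu.
have tu : v t < v u by apply: L2 => //; rewrite wt wu e'.
pose B' := fun y => v u <= v (z' - y)%R.
have gB' : good B'.
  exists z', u; split => //; first exact: le_trans hvt (ltW tu).
  by rewrite wu.
have subB' X : N X -> forall y, B' y -> X y.
  move=> NX y hy; have [x [r [Sr _ _ hr e]]] := PN1 X NX.
  have hxz := (e z).1 (zin X NX).
  have hrt : v r <= v t.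
    apply: L1 => //; rewrite wt.
    have : w (f r) <= w ((b - f x) + f (x - z))%R by apply: (val_min hw) => //; apply: hb.
    by rewrite raddfB addrA subrK.
  apply/(e y).2.
  have : v r <= v ((x - z) + ((z' - y) - t))%R.
    apply: (val_min hv) => //; apply: (val_minB hv) => //.
    exact: le_trans hrt (le_trans (ltW tu) hy).
  by rewrite [X in (_ + X)%R]addrAC /z' addrK addrA subrK.
have B'notin : ~ N B'.
  move=> NB'; have := zin _ NB'; rewrite /B' /z' [(z + t)%R]addrC addrK.
  by rewrite leNgt tu.
apply: (Nmax (fun X => N X \/ X = B')).
  split; first by move=> X NX; left.
  by move=> sub; apply: B'notin; apply: sub; right.
split.
  by move=> X [NX|->]; [exact: PN1|exact: gB'].
move=> X Y [NX|->] [NY|->].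
- exact: PN2.
- by right; apply: subB'.
- by left; apply: subB'.
- by left.
Qed.

Theorem mainTheorem2
  (A B : zmodType) (d1 d2 : Order.disp_t) (G1 : orderType d1) (G2 : orderType d2)
  (inf1 : G1) (inf2 : G2) (v : A -> G1) (w : B -> G2)
  (f : {additive A -> B}) (S : A -> Prop) :
  valued inf1 v -> valued inf2 w ->
  (* (a): phi : v(S) -> w(B), v s |-> w (f s), is well defined and order preserving *)
  (forall s s', S s -> S s' -> v s = v s' -> w (f s) = w (f s')) ->
  (forall s s', S s -> S s' -> v s < v s' -> w (f s) < w (f s')) ->
  (* (b) *)
  (forall a s, S s -> v s <= v a -> w (f s) <= w (f a)) ->
  (* (c) *)
  (forall b : B, b != 0%R -> exists s, S s /\ w b < w (b - f s)%R) ->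
  spherically_complete v ->
  (* f(B_alpha(a)) = B_{phi alpha}(f a) for alpha = v s in v(S) *)
  forall (a s : A), S s ->
    forall y : B,
      (exists x : A, ball v (v s) a x /\ f x = y) <-> ball w (w (f s)) (f a) y.
Proof.
move=> hv hw a1 a2 hb hc hsc a s Ss y; split.
  by move=> [x [hx <-]]; rewrite /ball -raddfB; exact: hb.
move=> hy; have [x [hx fx]] := core hv hw a1 a2 hb hc hsc _ _ Ss hy.
exists (a - x)%R; split; first by rewrite /ball opprB addrC subrK.
by rewrite raddfB fx opprB addrC subrK.
Qed.
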